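(* Let $\Gamma$ be a totally ordered additive abelian group and $E,F$ finite disjoint sets. A function $\mu\colon\binom{E}{\ast}\times\binom{F}{\ast}\to\overline{\Gamma}$ satisfies the valuated bimatroid axioms (1) and (2) below if and only if the function $\nu\colon\binom{E\sqcup F}{|E|}\to\overline{\Gamma}$, $\nu(S)=\mu(E- S,\,S\cap F)$, is a valuated matroid of rank $|E|$ on $E\sqcup F$ with $\nu(E)=0$. Axioms: (1) $\mu(\emptyset,\emptyset)=0$. (2) For all $(I,J),(I',J')\in\binom{E}{\ast}\times\binom{F}{\ast}$: (i) if $i'\in I'- I$, then either there is $i\in I- I'$ with $\mu(I,J)+\mu(I',J')\geq\mu(I-\{i\}\cup\{i'\},J)+\mu(I'-\{i'\}\cup\{i\},J')$, or there is $j'\in J'- J$ with $\mu(I,J)+\mu(I',J')\geq\mu(I\cup\{i'\},J\cup\{j'\})+\mu(I'-\{i'\},J'-\{j'\})$; (ii) if $j\in J- J'$, then either there is $i\in I- I'$ with $\mu(I,J)+\mu(I',J')\geq\mu(I-\{i\},J-\{j\})+\mu(I'\cup\{i\},J'\cup\{j\})$, or there is $j'\in J'- J$ with $\mu(I,J)+\mu(I',J')\geq\mu(I,J-\{j\}\cup\{j'\})+\mu(I',J'-\{j'\}\cup\{j\})$.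
   Context: $\overline{\Gamma}=\Gamma\sqcup\{\infty\}$ with $\infty$ larger than every element of $\Gamma$. $\binom{E}{\ast}\times\binom{F}{\ast}$ is the set of pairs $(I,J)$ with $I\subseteq E$, $J\subseteq F$, $|I|=|J|$; $\binom{X}{r}$ is the set of $r$-element subsets of $X$. A valuated matroid of rank $r$ on a finite set $X$ is a map $\nu\colon\binom{X}{r}\to\overline{\Gamma}$, not identically $\infty$, such that for all $S,T\in\binom{X}{r}$ and every $s\in S- T$ there is $t\in T- S$ with $\nu(S)+\nu(T)\geq\nu(S-\{s\}\cup\{t\})+\nu(T-\{t\}\cup\{s\})$. *)

(* Defs.v *)
From mathcomp Require Import all_boot all_order all_algebra.
Set Implicit Arguments. Unset Strict Implicit. Unset Printing Implicit Defensive.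
Import GRing.Theory.
Local Open Scope ring_scope.

Definition totally_ordered_group (G : zmodType) (le : rel G) : Prop :=
  [/\ reflexive le, antisymmetric le, transitive le, total le
    & forall x y z : G, le x y -> le (x + z) (y + z)].

(* Gamma-bar = Gamma ⊔ {oo}, represented as option G with None = oo. *)
Definition gbar (G : zmodType) := option G.

Definition gbar_add (G : zmodType) (a b : gbar G) : gbar G :=
  match a, b with Some x, Some y => Some (x + y) | _, _ => None end.

Definition gbar_le (G : zmodType) (le : rel G) (a b : gbar G) : bool :=
  match a, b with
  | _, None => true
  | None, Some _ => false
  | Some x, Some y => le x y
  end.

(* Valuated matroid of rank r on the finite ground set X (a subset of a
   finite type T); nu is only relevant on r-element subsets of X. *)
Definition valuated_matroid (T : finType) (G : zmodType) (le : rel G)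
    (X : {set T}) (r : nat) (nu : {set T} -> gbar G) : Prop :=
  (exists S : {set T}, [/\ S \subset X, #|S| = r & nu S <> None]) /\
  forall S U : {set T}, S \subset X -> #|S| = r -> U \subset X -> #|U| = r ->
    forall s, s \in S :\: U -> exists2 t, t \in U :\: S &
      gbar_le le (gbar_add (nu ((S :\ s) :|: [set t])) (nu ((U :\ t) :|: [set s])))
                 (gbar_add (nu S) (nu U)).

(* (I,J) in binom(E,any) x binom(F,any): I in E, J in F, |I| = |J| *)
Definition bipair (T : finType) (E F I J : {set T}) : Prop :=
  [/\ I \subset E, J \subset F & #|I| = #|J|].

Definition valuated_bimatroid_axioms (T : finType) (G : zmodType) (le : rel G)
    (E F : {set T}) (mu : {set T} -> {set T} -> gbar G) : Prop :=
  mu set0 set0 = Some 0 /\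
  forall I J I' J' : {set T}, bipair E F I J -> bipair E F I' J' ->
    let lhs := gbar_add (mu I J) (mu I' J') in
    (forall i', i' \in I' :\: I ->
       (exists2 i, i \in I :\: I' &
          gbar_le le (gbar_add (mu ((I :\ i) :|: [set i']) J)
                               (mu ((I' :\ i') :|: [set i]) J')) lhs)
       \/
       (exists2 j', j' \in J' :\: J &
          gbar_le le (gbar_add (mu (I :|: [set i']) (J :|: [set j']))
                               (mu (I' :\ i') (J' :\ j'))) lhs))
    /\
    (forall j, j \in J :\: J' ->
       (exists2 i, i \in I :\: I' &
          gbar_le le (gbar_add (mu (I :\ i) (J :\ j))
                               (mu (I' :|: [set i]) (J' :|: [set j]))) lhs)
       \/
       (exists2 j', j' \in J' :\: J &
          gbar_le le (gbar_add (mu I ((J :\ j) :|: [set j']))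
                               (mu I' ((J' :\ j') :|: [set j]))) lhs)).

(* Main.v *)
Require Import Defs.
From mathcomp Require Import all_boot all_order all_algebra.
From mathcomp Require Import zify.
Local Open Scope ring_scope.

Ltac ssolve := let x := fresh "x" in apply/setP=> x; rewrite !inE;
  repeat match goal with |- context [x == ?a] => have [->|?] := eqVneq x a end;
  rewrite ?eqxx /=;
  repeat match goal with H : is_true _ |- _ => rewrite ?H /=; clear H end;
  repeat match goal with H : _ = false |- _ => rewrite ?H /=; clear H end;
  repeat match goal with |- context [?y \in ?A] => case: (y \in A) end; by [].

Section L.
Variables (T : finType) (E F A : {set T}) (a b : T).
Lemma EE : a \in E -> b \in E -> a \in F = false -> b \in F = false -> a \in A -> b \notin A ->
  E :\: (A :\ a :|: [set b]) = (E :\: A) :\ b :|: [set a] /\ (A :\ a :|: [set b]) :&: F = A :&: F.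
Proof. move=> aE bE aF bF aA bA; have ab : (a == b) = false by apply/negbTE; apply: contraNneq bA => <-.
  have ba : (b == a) = false by rewrite eq_sym.
  move/negbTE: bA => bA.
  split; ssolve. Qed.
Lemma EF : a \in E -> b \in F -> a \in F = false -> b \in E = false -> a \in A -> b \notin A ->
  E :\: (A :\ a :|: [set b]) = (E :\: A) :|: [set a] /\ (A :\ a :|: [set b]) :&: F = (A :&: F) :|: [set b].
Proof. move=> aE bE aF bF aA bA; have ab : (a == b) = false by apply/negbTE; apply: contraNneq bA => <-.
  have ba : (b == a) = false by rewrite eq_sym.
  move/negbTE: bA => bA.
  split; ssolve. Qed.
Lemma FE : a \in F -> b \in E -> a \in E = false -> b \in F = false -> a \in A -> b \notin A ->
  E :\: (A :\ a :|: [set b]) = (E :\: A) :\ b /\ (A :\ a :|: [set b]) :&: F = (A :&: F) :\ a.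
Proof. move=> aE bE aF bF aA bA; have ab : (a == b) = false by apply/negbTE; apply: contraNneq bA => <-.
  have ba : (b == a) = false by rewrite eq_sym.
  move/negbTE: bA => bA.
  split; ssolve. Qed.
Lemma FF : a \in F -> b \in F -> a \in E = false -> b \in E = false -> a \in A -> b \notin A ->
  E :\: (A :\ a :|: [set b]) = E :\: A /\ (A :\ a :|: [set b]) :&: F = (A :&: F) :\ a :|: [set b].
Proof. move=> aE bE aF bF aA bA; have ab : (a == b) = false by apply/negbTE; apply: contraNneq bA => <-.
  have ba : (b == a) = false by rewrite eq_sym.
  move/negbTE: bA => bA.
  split; ssolve. Qed.
End L.
Arguments EE {T E F A a b}. Arguments EF {T E F A a b}. Arguments FE {T E F A a b}. Arguments FF {T E F A a b}.

Lemma RT (T : finType) (E F I J : {set T}) : [disjoint E & F] -> I \subset E -> J \subset F ->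
  E :\: ((E :\: I) :|: J) = I /\ ((E :\: I) :|: J) :&: F = J.
Proof.
move=> dis sI sJ; split; apply/setP=> x; rewrite !inE.
- case xI: (x \in I); first by rewrite (subsetP sI x xI) andbT /=; case xJ: (x \in J) => //;
    have := disjointFr dis (subsetP sI x xI); rewrite (subsetP sJ x xJ).
  by case: (x \in E); case: (x \in J).
- case xJ: (x \in J); first by rewrite (subsetP sJ x xJ) orbT.
  case xF: (x \in F); rewrite ?andbF ?andbT //.
  by rewrite (disjointFl dis xF) /= andbF.
Qed.

Lemma sizeS (T : finType) (E F S : {set T}) : [disjoint E & F] -> S \subset E :|: F ->
  #|S| = #|E| -> #|E :\: S| = #|S :&: F|.
Proof.
move=> dis sS cS.
have h1 := cardsID S E. have h2 := cardsID E S.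
have -> : S :&: F = S :\: E.
  apply/setP=> x; rewrite !inE; case xS: (x \in S) => /=; rewrite ?andbF //.
  have := subsetP sS x xS; rewrite inE; case/orP=> [xE|xF].
  - by rewrite xE (disjointFr dis xE).
  - by rewrite xF (disjointFl dis xF).
rewrite setIC in h2. lia.
Qed.

Theorem proposition2p2 (G : zmodType) (le : rel G)
    (T : finType) (E F : {set T}) (mu : {set T} -> {set T} -> gbar G) :
  totally_ordered_group le ->
  [disjoint E & F] ->
  valuated_bimatroid_axioms le E F mu <->
  (valuated_matroid le (E :|: F) #|E| (fun S => mu (E :\: S) (S :&: F)) /\
   mu (E :\: E) (E :&: F) = Some 0).
Proof.
move=> _ dis.
have dEF : forall x, x \in E -> x \in F = false := fun x => disjointFr dis.
have dFE : forall x, x \in F -> x \in E = false := fun x => disjointFl dis.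
have bp : forall V : {set T}, V \subset E :|: F -> #|V| = #|E| -> bipair E F (E :\: V) (V :&: F).
  move=> V sV cV; split; [exact: subsetDl | exact: subsetIr | exact: sizeS].
rewrite setDv (disjoint_setI0 dis).
split.
- case=> m0 ax; split => //; split.
    by exists E; rewrite subsetUl setDv (disjoint_setI0 dis) m0.
  move=> S U sS cS sU cU s /setDP [sS' sU'].
  have [H1 H2] := ax _ _ _ _ (bp S sS cS) (bp U sU cU).
  have := subsetP sS s sS'; rewrite inE => /orP [sE|sF].
  + have sF := dEF s sE.
    have : s \in (E :\: U) :\: (E :\: S) by rewrite !inE sE sU' sS'.
    move/H1 => [] [t].
    * rewrite !inE => /andP [H /andP [tS tE]].
      have tU : t \in U by move: H; rewrite tE andbT negbK.
      have tF := dEF t tE.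
      exists t; first by rewrite !inE tU tS.
      have [-> ->] := EE sE tE sF tF sS' tS.
      by have [-> ->] := EE tE sE tF sF tU sU'.
    * rewrite !inE => /andP [H /andP [tU tF]].
      have tS : t \notin S by move: H; rewrite tF andbT.
      have tE := dFE t tF.
      exists t; first by rewrite !inE tU tS.
      have [-> ->] := EF sE tF sF tE sS' tS.
      by have [-> ->] := FE tF sE tE sF tU sU'.
  + have sE := dFE s sF.
    have : s \in (S :&: F) :\: (U :&: F) by rewrite !inE sF sS' (negbTE sU').
    move/H2 => [] [t].
    * rewrite !inE => /andP [H /andP [tS tE]].
      have tU : t \in U by move: H; rewrite tE andbT negbK.
      have tF := dEF t tE.
      exists t; first by rewrite !inE tU tS.
      have [-> ->] := FE sF tE sE tF sS' tS.
      by have [-> ->] := EF tE sF tF sE tU sU'.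
    * rewrite !inE => /andP [H /andP [tU tF]].
      have tS : t \notin S by move: H; rewrite tF andbT.
      have tE := dFE t tF.
      exists t; first by rewrite !inE tU tS.
      have [-> ->] := FF sF tF sE tE sS' tS.
      by have [-> ->] := FF tF sF tE sE tU sU'.
- case=> [[_ ax] m0]; split => //.
  have claim : forall S U : {set T}, S \subset E :|: F -> #|S| = #|E| -> U \subset E :|: F -> #|U| = #|E| ->
    let I := E :\: S in let J := S :&: F in let I' := E :\: U in let J' := U :&: F in
    let lhs := gbar_add (mu I J) (mu I' J') in
    (forall i', i' \in I' :\: I ->
       (exists2 i, i \in I :\: I' &
          gbar_le le (gbar_add (mu ((I :\ i) :|: [set i']) J)
                               (mu ((I' :\ i') :|: [set i]) J')) lhs)
       \/
       (exists2 j', j' \in J' :\: J &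
          gbar_le le (gbar_add (mu (I :|: [set i']) (J :|: [set j']))
                               (mu (I' :\ i') (J' :\ j'))) lhs))
    /\
    (forall j, j \in J :\: J' ->
       (exists2 i, i \in I :\: I' &
          gbar_le le (gbar_add (mu (I :\ i) (J :\ j))
                               (mu (I' :|: [set i]) (J' :|: [set j]))) lhs)
       \/
       (exists2 j', j' \in J' :\: J &
          gbar_le le (gbar_add (mu I ((J :\ j) :|: [set j']))
                               (mu I' ((J' :\ j') :|: [set j]))) lhs)).
    move=> S U sS cS sU cU /=; split.
    + move=> s; rewrite !inE => /andP [H /andP [sU' sE]].
      have sS' : s \in S by move: H; rewrite sE andbT negbK.
      have sF := dEF s sE.
      have sSU : s \in S :\: U by rewrite !inE sS' sU'.
      have [t /setDP [tU tS] q] := ax S U sS cS sU cU s sSU; cbv beta in q.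
      have := subsetP sU t tU; rewrite inE => /orP [tE|tF].
      * have tF := dEF t tE. left; exists t; first by rewrite !inE tE tU (negbTE tS).
        case: (EE sE tE sF tF sS' tS) => e1 e2; rewrite e1 e2 in q.
        by case: (EE tE sE tF sF tU sU') => e3 e4; rewrite e3 e4 in q.
      * have tE := dFE t tF. right; exists t; first by rewrite !inE tF tU (negbTE tS).
        case: (EF sE tF sF tE sS' tS) => e1 e2; rewrite e1 e2 in q.
        by case: (FE tF sE tE sF tU sU') => e3 e4; rewrite e3 e4 in q.
    + move=> s; rewrite !inE => /andP [H /andP [sS' sF]].
      have sU' : s \notin U by move: H; rewrite sF andbT.
      have sE := dFE s sF.
      have sSU : s \in S :\: U by rewrite !inE sS' sU'.
      have [t /setDP [tU tS] q] := ax S U sS cS sU cU s sSU; cbv beta in q.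
      have := subsetP sU t tU; rewrite inE => /orP [tE|tF].
      * have tF := dEF t tE. left; exists t; first by rewrite !inE tE tU (negbTE tS).
        case: (FE sF tE sE tF sS' tS) => e1 e2; rewrite e1 e2 in q.
        by case: (EF tE sF tF sE tU sU') => e3 e4; rewrite e3 e4 in q.
      * have tE := dFE t tF. right; exists t; first by rewrite !inE tF tU (negbTE tS).
        case: (FF sF tF sE tE sS' tS) => e1 e2; rewrite e1 e2 in q.
        by case: (FF tF sF tE sE tU sU') => e3 e4; rewrite e3 e4 in q.
  move=> I J I' J' [sI sJ cIJ] [sI' sJ' cIJ'].
  have sz : forall A B : {set T}, A \subset E -> B \subset F -> #|A| = #|B| ->
      (E :\: A) :|: B \subset E :|: F /\ #|(E :\: A) :|: B| = #|E|.
    move=> A B sA sB cAB; split.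
      by apply: setUSS => //; apply: subsetDl.
    rewrite cardsU (cardsDS sA).
    have -> : (E :\: A) :&: B = set0.
      apply/setP=> x; rewrite !inE; case xB: (x \in B); rewrite ?andbF ?andbT //.
      by rewrite (dFE x (subsetP sB x xB)) andbF.
    rewrite cards0 subn0 -cAB. have := subset_leq_card sA. lia.
  have [s1 c1] := sz I J sI sJ cIJ. have [s2 c2] := sz I' J' sI' sJ' cIJ'.
  have := claim _ _ s1 c1 s2 c2.
  have [e1 e2] := RT _ _ _ _ _ dis sI sJ. have [e3 e4] := RT _ _ _ _ _ dis sI' sJ'.
  by rewrite /= e1 e2 e3 e4.
Qed.
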